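(* Let $X$ be a nonempty CFG-space over a Boolean ring $B$ and $f:X\to B$ a contractive map, where $B$ carries the metric $d(a,b)=a+b$. Then there exists $u\in X$ such that $f(x)\le f(u)$ for all $x\in X$.
   Context: $B$ is a Boolean ring ($a\vee b=a+b+ab$, $a\le b\iff ab=a$; $a_1\oplus\cdots\oplus a_n$ denotes a sum of pairwise disjoint elements). A Boolean metric space over $B$: set $X$ with $d:X\times X\to B$, $d(x,y)=0\iff x=y$, symmetric, $d(x,z)\le d(x,y)\vee d(y,z)$. For $x_1,\dots,x_n\in X$, $a_i\in B$ with $a_1\oplus\cdots\oplus a_n=1$, $x$ is a convex combination of the $x_i$ with coefficients $a_i$ if $a_id(x,x_i)=0$ for all $i$. A CFG-space is a space in which all such combinations exist and every element is a convex combination of elements of some fixed finite subset. A map $f$ is contractive if $d(f(x),f(y))\le d(x,y)$. *)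

(* Defs.v *)
From HB Require Import structures.
From mathcomp Require Import all_boot all_order all_algebra.
From Stdlib Require List.
Set Implicit Arguments. Unset Strict Implicit. Unset Printing Implicit Defensive.
Import GRing.Theory.
Local Open Scope ring_scope.

(* A Boolean ring: a (possibly trivial) commutative ring in which every
   element is idempotent; we take B : comPzRingType with hypothesis
   [boolean_ring B]. *)
Definition boolean_ring (B : comPzRingType) : Prop := forall a : B, a * a = a.

Definition bjoin (B : comPzRingType) (a b : B) : B := a + b + a * b.

Definition ble (B : comPzRingType) (a b : B) : Prop := a * b = a.

Definition bmetric (B : comPzRingType) (X : Type) (d : X -> X -> B) : Prop :=
  (forall x y, d x y = 0 <-> x = y) /\
  (forall x y, d x y = d y x) /\
  (forall x y z, ble (d x z) (bjoin (d x y) (d y z))).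

(* a_1 (+) ... (+) a_n = 1 : pairwise disjoint elements with sum 1 *)
Definition bpartition (B : comPzRingType) (n : nat) (a : 'I_n -> B) : Prop :=
  (forall i j : 'I_n, i != j -> a i * a j = 0) /\ \sum_(i < n) a i = 1.

Definition is_convex_comb (B : comPzRingType) (X : Type) (d : X -> X -> B)
    (n : nat) (x : X) (xs : 'I_n -> X) (a : 'I_n -> B) : Prop :=
  forall i : 'I_n, a i * d x (xs i) = 0.

Definition CFG_space (B : comPzRingType) (X : Type) (d : X -> X -> B) : Prop :=
  bmetric d /\
  (forall (n : nat) (xs : 'I_n -> X) (a : 'I_n -> B),
      bpartition a -> exists x : X, is_convex_comb d x xs a) /\
  (exists S : seq X, forall x : X,
      exists (n : nat) (xs : 'I_n -> X) (a : 'I_n -> B),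
        (forall i, List.In (xs i) S) /\ bpartition a /\ is_convex_comb d x xs a).

(* contractive map X -> B, with B carrying the metric d(a,b) = a + b *)
Definition contractive_toB (B : comPzRingType) (X : Type) (d : X -> X -> B)
    (f : X -> B) : Prop :=
  forall x y, ble (f x + f y) (d x y).

(* Main.v *)
Require Import Defs.
From HB Require Import structures.
From mathcomp Require Import all_boot all_order all_algebra.
Set Implicit Arguments. Unset Strict Implicit. Unset Printing Implicit Defensive.
Import GRing.Theory.
Local Open Scope ring_scope.

Section H.
Variable B : comPzRingType.
Hypothesis HB : boolean_ring B.

Lemma add_self (a : B) : a + a = 0.
Proof.
have h := HB (a + a).
rewrite mulrDl !mulrDr HB in h.
apply/eqP; rewrite -(addrI (a + a) (_ : (a + a) + (a + a) = (a+a) + 0)) //.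
by rewrite addr0 -{3}h !addrA.
Qed.

Lemma opp_self (a : B) : - a = a.
Proof. by apply/eqP; rewrite eq_sym -subr_eq0 opprK add_self. Qed.

Lemma ble_trans (p q r : B) : ble p q -> ble q r -> ble p r.
Proof. by rewrite /ble => h1 h2; rewrite -h1 -mulrA h2. Qed.

Lemma ble_zero (c p q : B) : ble p q -> c * q = 0 -> c * p = 0.
Proof. by rewrite /ble => h1 h2; rewrite -h1 mulrCA h2 mulr0. Qed.

Lemma eq_of_ann (c p q : B) : c * (p + q) = 0 -> c * p = c * q.
Proof.
move=> h; apply/eqP; rewrite -subr_eq0 opp_self -mulrDr h //.
Qed.
End H.

Theorem mainTheorem19 (B : comPzRingType) (X : Type) (d : X -> X -> B)
    (f : X -> B) (HB : boolean_ring B) (HX : CFG_space d)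
    (Hne : inhabited X) (Hf : contractive_toB d f) :
  exists u : X, forall x : X, ble (f x) (f u).
Proof.
case: HX => _ [Hcomb [S HS]].
have step : forall S : seq X, exists u, forall s, List.In s S -> ble (f s) (f u).
  elim=> [|s S' [u Hu]].
    by case: Hne => x0; exists x0.
  pose a : B := f s * (1 - f u).
  pose xs : 'I_2 -> X := fun i => if i == ord0 then s else u.
  pose c : 'I_2 -> B := fun i => if i == ord0 then a else 1 - a.
  have ha : a * (1 - a) = 0 by rewrite mulrBr mulr1 HB subrr.
  have hp : bpartition c.
    split.
      move=> [[|[|k]] hi] [[|[|k']] hj] //= hne; rewrite /c /=.
      - by rewrite mulrC ha.
    by rewrite big_ord_recr big_ord_recl big_ord0 /c /= addr0 addrC subrK.
  have [v Hv] := Hcomb _ xs c hp.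
  have h0 := Hv ord0; have h1 := Hv (lift ord0 ord0).
  rewrite /c /xs /= in h0 h1.
  have e0 : a * f v = a * f s by apply: eq_of_ann HB _ _ _ (ble_zero (Hf v s) h0).
  have e1 : (1 - a) * f v = (1 - a) * f u by apply: eq_of_ann HB _ _ _ (ble_zero (Hf v u) h1).
  have af : a * f s = a by rewrite /a mulrAC HB.
  have au : a * f u = 0 by rewrite /a -mulrA mulrBl mul1r HB subrr mulr0.
  have fv : f v = a + f u.
    by rewrite -[f v]mul1r -(subrK a 1) mulrDl e1 addrC e0 af mulrBl mul1r au subr0.
  have hu : ble (f u) (f v) by rewrite /ble fv mulrDr mulrC au add0r HB.
  exists v => t [<-|ht].
    by rewrite /ble fv mulrDr /a mulrA HB mulrBr mulr1 subrK.
  exact: ble_trans (Hu t ht) hu.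
have [u Hu] := step S.
exists u => x.
have [n [xs [c [Hin [[_ Hsum] Hc]]]]] := HS x.
have ex : forall j, c j * f x = c j * f (xs j).
  by move=> j; apply: eq_of_ann HB _ _ _ (ble_zero (Hf x (xs j)) (Hc j)).
have fx : f x = \sum_(j < n) c j * f (xs j).
  by rewrite -[f x]mul1r -Hsum mulr_suml; apply: eq_bigr => j _; rewrite ex.
rewrite /ble fx mulr_suml; apply: eq_bigr => j _.
by rewrite -mulrA (Hu _ (Hin j)).
Qed.
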